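(* Let $n$ be a square-free integer with $n\neq 1$. For every $(a,b,c)\in A(n)$ there exists $g\in H(2)$ such that $g(a,b,c)\in B(n)$, where $B(n)=\{(a,b,c)\in A(n): |a|\leq|b|,\ |a|\leq|c|\}$.
   Context: $A(n)=\{(a,b,c)\in\mathbb{Z}^3: bc=a^2-n\}$, in bijection with $\mathbb{Q}^*(\sqrt n)=\{\frac{a+\sqrt n}{c}: a,c\in\mathbb Z, c\neq 0, \frac{a^2-n}{c}\in\mathbb Z\}$ via $\frac{a+\sqrt n}{c}\mapsto (a,\frac{a^2-n}{c},c)$. $H(2)$ is the group generated by $x:z\mapsto -1/z$ and $w_2:z\mapsto z+2$, acting on triples by $x(a,b,c)=(-a,c,b)$ and $w_{2k}(a,b,c)=(a+2kc,\,4ka+b+4k^2c,\,c)$ for $k\in\mathbb Z$. *)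

(* Defs.v *)
From Stdlib Require Import ZArith.
Open Scope Z_scope.

Definition triple := (Z * Z * Z)%type.

Definition squarefree (n : Z) : Prop :=
  forall d : Z, (d * d | n) -> Z.abs d = 1.

Definition inA (n : Z) (t : triple) : Prop :=
  let '(a, b, c) := t in b * c = a * a - n.

Definition inB (n : Z) (t : triple) : Prop :=
  let '(a, b, c) := t in inA n t /\ Z.abs a <= Z.abs b /\ Z.abs a <= Z.abs c.

(* action of x : z |-> -1/z *)
Definition act_x (t : triple) : triple :=
  let '(a, b, c) := t in (- a, c, b).

(* action of w_{2k} : z |-> z + 2k *)
Definition act_w (k : Z) (t : triple) : triple :=
  let '(a, b, c) := t in (a + 2 * k * c, 4 * k * a + b + 4 * k * k * c, c).

(* H(2) acting on triples: the group generated by x and w_2, i.e. all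
   finite compositions of x, w_2 and w_2^{-1} = w_{-2} (x is an involution). *)
Inductive H2 : (triple -> triple) -> Prop :=
| H2_id : H2 (fun t => t)
| H2_x : forall g, H2 g -> H2 (fun t => act_x (g t))
| H2_w : forall g, H2 g -> H2 (fun t => act_w 1 (g t))
| H2_winv : forall g, H2 g -> H2 (fun t => act_w (-1) (g t)).

(* Main.v *)
Require Import Defs.
From Stdlib Require Import ZArith Lia.
Open Scope Z_scope.

Lemma H2_comp : forall g, H2 g -> forall h, H2 h -> H2 (fun t => g (h t)).
Proof.
  intros g Hg; induction Hg; intros h Hh.
  - exact Hh.
  - apply (H2_x (fun t => g (h t))); auto.
  - apply (H2_w (fun t => g (h t))); auto.
  - apply (H2_winv (fun t => g (h t))); auto.
Qed.

Lemma act_w_add : forall j k t, act_w j (act_w k t) = act_w (j + k) t.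
Proof. intros j k [[a b] c]; unfold act_w; cbv zeta.
  replace (a + 2 * k * c + 2 * j * c) with (a + 2 * (j + k) * c) by ring.
  replace (4 * j * (a + 2 * k * c) + (4 * k * a + b + 4 * k * k * c) + 4 * j * j * c) with (4 * (j + k) * a + b + 4 * (j + k) * (j + k) * c) by ring. reflexivity. Qed.

Lemma act_w0 : forall t, act_w 0 t = t.
Proof. intros [[a b] c]; unfold act_w.
  replace (a + 2 * 0 * c) with a by ring. replace (4 * 0 * a + b + 4 * 0 * 0 * c) with b by ring. reflexivity. Qed.

Lemma H2_wnat : forall m : nat, exists g, H2 g /\
  (forall t, g t = act_w (Z.of_nat m) t) /\ exists g2, H2 g2 /\ (forall t, g2 t = act_w (- Z.of_nat m) t).
Proof.
  induction m as [|m [g [Hg [Eg [g2 [Hg2 Eg2]]]]]].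
  - exists (fun t => t); split; [constructor|split].
    + intro t; simpl; now rewrite act_w0.
    + exists (fun t => t); split; [constructor|]. intro t; simpl; now rewrite act_w0.
  - exists (fun t => act_w 1 (g t)); split; [now constructor|split].
    + intro t; rewrite Eg, act_w_add; f_equal; lia.
    + exists (fun t => act_w (-1) (g2 t)); split; [now constructor|].
      intro t; rewrite Eg2, act_w_add; f_equal; lia.
Qed.

Lemma H2_wk : forall k, exists g, H2 g /\ forall t, g t = act_w k t.
Proof.
  intro k. destruct (Z_le_gt_dec 0 k).
  - destruct (H2_wnat (Z.to_nat k)) as [g [Hg [Eg _]]].
    exists g; split; auto. intro t; rewrite Eg; f_equal; lia.
  - destruct (H2_wnat (Z.to_nat (-k))) as [g1 [Hg1 [Eg1 [g2 [Hg2 Eg2]]]]].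
    exists g2; split; auto. intro t; rewrite Eg2; f_equal; lia.
Qed.

Lemma reduce : forall a c, c <> 0 -> exists k, Z.abs (a + 2 * k * c) <= Z.abs c.
Proof.
  intros a c Hc.
  assert (Hm : 0 < 2 * Z.abs c) by lia.
  pose proof (Z.div_mod a (2 * Z.abs c) ltac:(lia)) as D.
  pose proof (Z.mod_pos_bound a (2 * Z.abs c) Hm) as B.
  set (q := a / (2 * Z.abs c)) in *. set (r := a mod (2 * Z.abs c)) in *.
  destruct (Z_le_gt_dec 0 c).
  - rewrite Z.abs_eq in * by lia.
    destruct (Z_le_gt_dec r c).
    + exists (- q). lia.
    + exists (- q - 1). lia.
  - rewrite Z.abs_neq in * by lia.
    destruct (Z_le_gt_dec r (- c)).
    + exists q. lia.
    + exists (q + 1). lia.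
Qed.

Lemma inA_w : forall n k t, inA n t -> inA n (act_w k t).
Proof.
  intros n k [[a b] c]; unfold inA, act_w; intro H.
  assert (n = a * a - b * c) by lia. subst n. ring.
Qed.

Lemma inA_x : forall n t, inA n t -> inA n (act_x t).
Proof. intros n [[a b] c]; unfold inA, act_x; intro H. lia. Qed.

Theorem mainTheorem6 (n : Z) (hsq : squarefree n) (hn : n <> 1)
  (a b c : Z) (habc : inA n (a, b, c)) :
  exists g : triple -> triple, H2 g /\ inB n (g (a, b, c)).
Proof.
  assert (Hz : forall a b c, inA n (a, b, c) -> b * c = 0 -> a = 0).
  { intros a0 b0 c0 H H0. simpl in H.
    destruct (Z.eq_dec a0 0); auto.
    assert (Z.abs a0 = 1) as E.
    { apply hsq. exists 1. lia. }
    exfalso. apply hn. destruct (Z.abs_spec a0) as [[_ E2]|[_ E2]]; nia. }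
  remember (Z.abs_nat a) as N eqn:EN.
  revert a b c habc EN.
  induction N as [N IH] using (well_founded_induction lt_wf).
  intros a b c habc EN.
  destruct (Z_le_gt_dec (Z.abs a) (Z.abs b)) as [Hb|Hb];
  destruct (Z_le_gt_dec (Z.abs a) (Z.abs c)) as [Hc|Hc].
  - exists (fun t => t); split; [constructor|]. simpl; auto.
  -
    assert (c <> 0) as Hc0.
    { intro E; subst c. assert (a = 0) by (apply (Hz a b 0); auto; lia). lia. }
    destruct (reduce a c Hc0) as [k Hk].
    destruct (H2_wk k) as [h [Hh Eh]].
    destruct (IH (Z.abs_nat (a + 2 * k * c))) with
      (a := a + 2 * k * c) (b := 4 * k * a + b + 4 * k * k * c) (c := c)
      as [g [Hg Bg]].
    + lia.
    + apply (inA_w n k (a, b, c)); auto.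
    + reflexivity.
    + exists (fun t => g (h t)); split; [apply H2_comp; auto|].
      rewrite Eh. exact Bg.
  - assert (b <> 0) as Hb0.
    { intro E; subst b. assert (a = 0) by (apply (Hz a 0 c); auto; lia). lia. }
    destruct (reduce (- a) b Hb0) as [k Hk].
    destruct (H2_wk k) as [h [Hh Eh]].
    destruct (IH (Z.abs_nat (- a + 2 * k * b))) with
      (a := - a + 2 * k * b) (b := 4 * k * (- a) + c + 4 * k * k * b) (c := b)
      as [g [Hg Bg]].
    + lia.
    + apply (inA_w n k (- a, c, b)). apply (inA_x n (a, b, c)); auto.
    + reflexivity.
    + exists (fun t => g (h (act_x t))); split.
      * apply (H2_comp g Hg (fun t => h (act_x t))).
        apply (H2_comp h Hh (fun t => act_x t)).
        apply (H2_x (fun t => t)); constructor.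
      * rewrite Eh. exact Bg.
  - assert (b <> 0) as Hb0.
    { intro E; subst b. assert (a = 0) by (apply (Hz a 0 c); auto; lia). lia. }
    destruct (reduce (- a) b Hb0) as [k Hk].
    destruct (H2_wk k) as [h [Hh Eh]].
    destruct (IH (Z.abs_nat (- a + 2 * k * b))) with
      (a := - a + 2 * k * b) (b := 4 * k * (- a) + c + 4 * k * k * b) (c := b)
      as [g [Hg Bg]].
    + lia.
    + apply (inA_w n k (- a, c, b)). apply (inA_x n (a, b, c)); auto.
    + reflexivity.
    + exists (fun t => g (h (act_x t))); split.
      * apply (H2_comp g Hg (fun t => h (act_x t))).
        apply (H2_comp h Hh (fun t => act_x t)).
        apply (H2_x (fun t => t)); constructor.
      * rewrite Eh. exact Bg.
Qed.
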